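(* Let $\{x_k\}_{k\ge 0}$ be a log-convex sequence and define $z_n=\sum_{k=0}^{n}c(n,k)x_k$ for $n\ge 0$. Then $\{z_n\}_{n\ge 0}$ is log-convex.
   Context: $c(n,k)$ denotes the signless Stirling number of the first kind: the number of permutations of $\{1,\dots,n\}$ with exactly $k$ cycles, with $c(0,0)=1$ and $c(n,k)=0$ unless $0\le k\le n$. A sequence $a_0,a_1,\ldots$ of nonnegative real numbers is log-convex if $a_{k-1}a_{k+1}\ge a_k^2$ for all $k\ge 1$. *)

(* Defs.v *)
From mathcomp Require Import all_boot all_order all_algebra.
Set Implicit Arguments. Unset Strict Implicit. Unset Printing Implicit Defensive.
Import Order.TTheory GRing.Theory Num.Theory.

(* Signless Stirling numbers of the first kind c(n,k): number of permutations
   of {1..n} with exactly k cycles. *)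
Fixpoint stirling1 (n k : nat) : nat :=
  match n, k with
  | 0, 0 => 1
  | 0, _.+1 => 0
  | _.+1, 0 => 0
  | n'.+1, k'.+1 => n' * stirling1 n' k'.+1 + stirling1 n' k'
  end.

Local Open Scope ring_scope.

Definition log_convex (R : realFieldType) (a : nat -> R) : Prop :=
  (forall k, 0 <= a k) /\ (forall k, (0 < k)%N -> a k ^+ 2 <= a k.-1 * a k.+1).

Definition stirling_transform (R : realFieldType) (x : nat -> R) (n : nat) : R :=
  \sum_(0 <= k < n.+1) (stirling1 n k)%:R * x k.

(* Main.v *)
Require Import Defs.
From mathcomp Require Import all_boot all_order all_algebra.
From mathcomp Require Import ring lra.
Import Order.TTheory GRing.Theory Num.Theory.
Local Open Scope ring_scope.

Section Aux.
Variable R : realFieldType.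

Fixpoint G (a : R) (n : nat) (y : nat -> R) {struct n} : R :=
  match n with
  | 0%N => y 0%N
  | n'.+1 => G (a + 1) n' (fun m => y m.+1 + a * y m)
  end.

Lemma G_ext n : forall a (y y' : nat -> R), (forall m, y m = y' m) -> G a n y = G a n y'.
Proof.
elim: n => [|n IH] a y y' H /=; first by rewrite H.
by apply: IH => m; rewrite !H.
Qed.

Lemma G_comm n : forall a (y : nat -> R),
  G a n.+1 y = G a n (fun m => y m.+1 + (a + n%:R) * y m).
Proof.
elim: n => [|n IH] a y; first by rewrite /= addr0.
change (G (a+1) n.+1 (fun m => y m.+1 + a * y m) = G a n.+1 (fun m => y m.+1 + (a + n.+1%:R) * y m)).
rewrite IH /=; apply: G_ext => m.
rewrite -natr1; ring.
Qed.

Lemma st_gt n k : (n < k)%N -> stirling1 n k = 0%N.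
Proof.
elim: n k => [|n IH] [|k] //= H.
by rewrite (IH k.+1) ?(IH k) ?muln0 // ltnW.
Qed.

Lemma ST_ext (x : nat -> R) n N : (n < N)%N ->
  stirling_transform x n = \sum_(k < N) (stirling1 n k)%:R * x k.
Proof.
move=> H; rewrite /stirling_transform big_mkord.
rewrite (big_ord_widen N (fun k => (stirling1 n k)%:R * x k) H) big_mkcond /=.
apply: eq_bigr => k _; case: ifP => // /negbT; rewrite -leqNgt => hk.
by rewrite st_gt // mul0r.
Qed.

Lemma ST_rec (x : nat -> R) n :
  stirling_transform x n.+1 = n%:R * stirling_transform x n
    + stirling_transform (fun m => x m.+1) n.
Proof.
rewrite (@ST_ext x n.+1 n.+2 (ltnSn _)) (@ST_ext x n n.+2 (ltnW (ltnSn _))) (@ST_ext _ n n.+1 (ltnSn _)).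
rewrite big_ord_recl /= mul0r add0r.
rewrite [X in _ = _ * X + _]big_ord_recl /= mulrDr.
have -> : n%:R * ((stirling1 n 0)%:R * x 0%N) = 0 :> R.
  by case: n => [|n]; rewrite /= ?mulr0n ?mul0r ?mulr0.
rewrite add0r mulr_sumr -big_split /=; apply: eq_bigr => i _.
by rewrite natrD natrM; ring.
Qed.

Lemma ST_G n : forall x : nat -> R, stirling_transform x n = G 0 n x.
Proof.
elim: n => [|n IH] x.
  by rewrite /stirling_transform big_nat1 /= mul1r.
rewrite ST_rec G_comm add0r -IH /stirling_transform mulr_sumr -big_split /=.
by apply: eq_bigr => i _; ring.
Qed.

Lemma lc_comb (a b c d e f : R) : 0 <= a -> 0 <= b -> 0 <= c -> 0 <= d -> 0 <= e -> 0 <= f ->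
  b ^+ 2 <= a * c -> e ^+ 2 <= d * f -> (b + e) ^+ 2 <= (a + d) * (c + f).
Proof.
move=> ha hb hc hd he hf h1 h2.
have h3 : (b * e) ^+ 2 <= (a * f) * (d * c).
  have -> : a * f * (d * c) = (a * c) * (d * f) by ring.
  rewrite exprMn; apply: ler_pM => //; apply: sqr_ge0.
have h4 : 2 * (b * e) <= a * f + d * c.
  have hp : 0 <= a * f + d * c by apply: addr_ge0; apply: mulr_ge0.
  rewrite -(@ler_pXn2r _ 2%N) // ?nnegrE ?mulr_ge0 //.
  have := sqr_ge0 (a * f - d * c); nra.
nra.
Qed.

Definition lc (y : nat -> R) :=
  (forall k, 0 <= y k) /\ (forall k, y k.+1 ^+ 2 <= y k * y k.+2).

Lemma lc_step (a : R) y : 0 <= a -> lc y -> lc (fun m => y m.+1 + a * y m).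
Proof.
move=> ha [h0 h1]; split => [k|k]; first by rewrite addr_ge0 ?mulr_ge0.
apply: lc_comb; rewrite ?mulr_ge0 //.
rewrite exprMn; have -> : a * y k * (a * y k.+2) = a ^+ 2 * (y k * y k.+2) by ring.
by apply: ler_wpM2l; [exact: sqr_ge0 | exact: h1].
Qed.

Lemma G_ge0 n : forall a y, 0 <= a -> lc y -> 0 <= G a n y.
Proof.
elim: n => [|n IH] a y ha hy /=; first by case: hy.
apply: IH; first by rewrite addr_ge0.
exact: lc_step.
Qed.

Lemma G_lc k : forall a y, 0 <= a -> lc y ->
  G a k.+1 y ^+ 2 <= G a k y * G a k.+2 y.
Proof.
elim: k => [|k IH] a y ha hy.
  case: hy => h0 h1; move: (h0 0%N) (h0 1%N) (h1 0%N) => /= p0 p1 q.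
  nra.
have -> : G a k.+2 y = G (a + 1) k.+1 (fun m => y m.+1 + a * y m) by [].
have -> : G a k.+3 y = G (a + 1) k.+2 (fun m => y m.+1 + a * y m) by [].
have -> : G a k.+1 y = G (a + 1) k (fun m => y m.+1 + a * y m) by [].
apply: IH; first by rewrite addr_ge0.
exact: lc_step.
Qed.

End Aux.

Theorem mainTheorem3 (R : realFieldType) (x : nat -> R) :
  @log_convex R x -> @log_convex R (@stirling_transform R x).
Proof.
case=> h0 h1.
have hy : @lc R x by split => // k; exact: (h1 k.+1).
split => [n|[//|k] _]; rewrite !ST_G; first exact: G_ge0.
exact: G_lc.
Qed.
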